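(* For Global SEMO (standard mutation, fitness $f=(Cost,LP)$) on the weighted vertex cover problem, the search point $0^n$ is included in the population in expected time $O\big(OPT\cdot n(\log W_{max}+\log n)\big)$.
   Context: Weighted vertex cover: $G=(V,E)$, $V=\{v_1,\dots,v_n\}$, $w:V\to\mathbb{N}^+$, $W_{max}=\max_v w(v)$; $OPT$ is the minimum weight of a vertex cover. Search points $x\in\{0,1\}^n$; $Cost(x)=\sum_i w(v_i)x_i$; $G(x)$ is $G$ with selected vertices and edges having a selected endpoint removed; $LP(x)$ is the optimal value of: minimize $\sum_{v_i\in V(x)}w(v_i)y_i$ s.t. $y_i+y_j\ge1$ for edges $\{v_i,v_j\}$ of $G(x)$, $0\le y_i\le1$. $f(x)\le f(y)$ means componentwise $\le$. Global SEMO: start with a uniformly random $x$, $P=\{x\}$; each iteration choose $x\in P$ uniformly at random, create $x'$ by flipping each bit independently with probability $1/n$; if no $y\in P$ has $f(y)\le f(x')$, add $x'$ to $P$ and delete all other $z\in P$ with $f(x')\le f(z)$. Time = number of iterations. *)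

(* Defs.v *)
From HB Require Import structures.
From mathcomp Require Import all_boot all_order all_algebra.
From mathcomp Require Import classical_sets reals exp.
Set Implicit Arguments. Unset Strict Implicit. Unset Printing Implicit Defensive.
Import Order.TTheory GRing.Theory Num.Theory.

Local Open Scope ring_scope.

Section WVC.
Variable R : realType.
Variable n : nat.
Variable e : rel 'I_n.
Variable w : 'I_n -> nat.

Definition bits := {ffun 'I_n -> bool}.

Definition is_vertex_cover (C : {set 'I_n}) : bool :=
  [forall i, forall j, e i j ==> (i \in C) || (j \in C)].

Definition weight (C : {set 'I_n}) : nat := (\sum_(i in C) w i)%N.

(* OPT = minimum weight of a vertex cover (setT is always a cover) *)
Definition OPT : nat :=
  let all := [set: 'I_n]%SET : {set 'I_n} in
  (\big[minn/weight all]_(C : {set 'I_n} | is_vertex_cover C) weight C)%N.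

Definition Wmax : nat := (\max_(i < n) w i)%N.

Definition cost (x : bits) : nat := (\sum_(i < n) w i * x i)%N.

(* LP(x): variables y_i for the non-selected vertices v_i in V(x);
   constraints for edges of G(x) (both endpoints non-selected). *)
Definition lp_feasible (x : bits) (y : 'I_n -> R) : Prop :=
  (forall i, ~~ x i -> 0 <= y i <= 1) /\
  (forall i j, e i j -> ~~ x i -> ~~ x j -> 1 <= y i + y j).

Definition lp_obj (x : bits) (y : 'I_n -> R) : R :=
  \sum_(i < n | ~~ x i) (w i)%:R * y i.

Definition LP (x : bits) : R :=
  inf [set v : R | exists y, lp_feasible x y /\ v = lp_obj x y]%classic.

Definition fle (x y : bits) : bool :=
  ((cost x <= cost y)%N && (LP x <= LP y)).

Definition update (P : {set bits}) (x' : bits) : {set bits} :=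
  if [exists y in P, fle y x'] then P
  else x' |: [set z in P | ~~ fle x' z].

Definition mutp (x x' : bits) : R :=
  \prod_(i < n) (if x i != x' i then n%:R^-1 else 1 - n%:R^-1).

(* one-iteration transition probability of the population Markov chain *)
Definition kernel (P P' : {set bits}) : R :=
  #|P|%:R^-1 * \sum_(x in P) \sum_(x' : bits) mutp x x' * (update P x' == P')%:R.

Definition init (P : {set bits}) : R :=
  \sum_(x : bits) (2%:R ^- n) * (P == [set x])%:R.

Definition zero_bits : bits := [ffun _ => false].

(* surv t P = Pr[ P_t = P and 0^n notin P_s for all s <= t ] *)
Fixpoint surv (t : nat) (P : {set bits}) : R :=
  (zero_bits \notin P)%:R *
  match t with
  | 0 => init P
  | t'.+1 => \sum_(Q : {set bits}) surv t' Q * kernel Q P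
  end.

(* Pr[T > t], T = number of iterations until 0^n is in the population *)
Definition prob_T_gt (t : nat) : R := \sum_(P : {set bits}) surv t P.

End WVC.

(* Main.v *)
Require Import Defs.
From HB Require Import structures.
From mathcomp Require Import all_boot all_order all_algebra.
From mathcomp Require Import classical_sets reals exp sequences.
From mathcomp Require Import ring lra zify.
Import Order.TTheory GRing.Theory Num.Theory.
Local Open Scope ring_scope.
Set Implicit Arguments. Unset Strict Implicit. Unset Printing Implicit Defensive.

Lemma nbigmin_le (I : finType) (P : pred I) (F : I -> nat) x0 i :
  P i -> (\big[minn/x0]_(j | P j) F j <= F i)%N.
Proof.
move=> Pi; rewrite -big_filter.
have : i \in [seq j <- index_enum I | P j] by rewrite mem_filter Pi mem_index_enum.
elim: [seq j <- index_enum I | P j] => //= a s IH; rewrite inE big_cons.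
case/orP => [/eqP<-|/IH h]; first exact: geq_minl.
exact: leq_trans (geq_minr _ _) h.
Qed.

Lemma nbigmin_attained (I : finType) (P : pred I) (F : I -> nat) x0 :
  \big[minn/x0]_(j | P j) F j = x0 \/
  exists2 i, P i & \big[minn/x0]_(j | P j) F j = F i.
Proof.
elim/big_rec: _ => [|i m Pi IH]; first by left.
rewrite /minn; case: ifP => _; first by right; exists i.
by case: IH => [->|[j Pj ->]]; [left|right; exists j].
Qed.

Lemma nbigmin_ub (I : finType) (P : pred I) (F : I -> nat) x0 :
  (\big[minn/x0]_(j | P j) F j <= x0)%N.
Proof. by elim/big_rec: _ => // i m _ IH; exact: leq_trans (geq_minr _ _) IH. Qed.

Lemma argmin_ex (R : realType) (I : finType) (P : pred I) (F : I -> R) i0 :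
  P i0 -> exists2 i, P i & forall j, P j -> F i <= F j.
Proof.
move=> Pi0.
case: (@extremumP R I (fun a b : R => a <= b) i0 P F le_refl (@le_trans _ _) le_total Pi0).
by move=> i Pi H; exists i.
Qed.

Section LPhalf.
Variables (R : realType) (n : nat) (e : rel 'I_n) (w : 'I_n -> nat) (x : bits n).

Definition feasb (f : {ffun 'I_n -> 'I_3}) : bool :=
  [forall i, forall j, (e i j && ~~ x i && ~~ x j) ==> (2 <= f i + f j)%N].
Definition val3 (f : {ffun 'I_n -> 'I_3}) : nat := (\sum_(i < n | ~~ x i) w i * f i)%N.
Definition f2 : {ffun 'I_n -> 'I_3} := [ffun _ => ord_max].
Definition m2 : nat := \big[minn/val3 f2]_(f | feasb f) val3 f.

Lemma feasb_f2 : feasb f2.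
Proof. by apply/forallP=> i; apply/forallP=> j; rewrite !ffunE; apply/implyP. Qed.

Lemma m2_attained : exists2 f, feasb f & m2 = val3 f.
Proof.
rewrite /m2; case: (nbigmin_attained feasb val3 (val3 f2)) => [->|[f Hf ->]].
  by exists f2; first exact: feasb_f2.
by exists f.
Qed.

Lemma m2_le f : feasb f -> (m2 <= val3 f)%N.
Proof. exact: nbigmin_le. Qed.

Definition halfb (r : R) : bool := (r == 0) || (r == 2^-1) || (r == 1).
Definition badset (y : 'I_n -> R) : {set 'I_n} := [set i | ~~ x i && ~~ halfb (y i)].

Lemma fval (y : 'I_n -> R) i : halfb (y i) ->
  (((if y i == 0 then (ord0 : 'I_3) else if y i == 2^-1 then inord 1 else ord_max) : nat)%:R : R) = 2 * y i.
Proof.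
have h1 : (2^-1 : R) != 0 by rewrite invr_eq0 pnatr_eq0.
have h2 : (1 : R) != 2^-1 by apply/negP => /eqP h; lra.
rewrite /halfb => /orP[/orP[]|] /eqP ->.
- by rewrite eqxx mulr0.
- by rewrite (negbTE h1) eqxx inordK // mulfV ?pnatr_eq0.
- by rewrite oner_eq0 (negbTE h2) /= mulr1.
Qed.

Lemma red_base y : lp_feasible e x y -> #|badset y| = 0%N ->
  exists2 f, feasb f & (val3 f)%:R / 2 <= lp_obj w x y.
Proof.
move=> [Hb He] B0.
have hy i : ~~ x i -> halfb (y i).
  move=> xi; apply/negPn/negP => nh.
  have : i \in badset y by rewrite inE xi nh.
  by rewrite (card0_eq B0).
pose f : {ffun 'I_n -> 'I_3} :=
  [ffun i => if y i == 0 then (ord0 : 'I_3) else if y i == 2^-1 then inord 1 else ord_max].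
have hf i : ~~ x i -> (((f i) : nat)%:R : R) = 2 * y i.
  by move=> xi; rewrite ffunE fval // hy.
exists f.
  apply/forallP=> i; apply/forallP=> j; apply/implyP => /andP[/andP[eij xi] xj].
  rewrite -(ler_nat R) natrD hf // hf //.
  have := He i j eij xi xj; lra.
rewrite /val3 natr_sum mulr_suml /lp_obj; rewrite le_eqVlt; apply/orP; left; apply/eqP/eq_bigr => i xi.
by rewrite natrM hf //; field.
Qed.
Lemma red_step y : lp_feasible e x y -> (0 < #|badset y|)%N ->
  exists y', [/\ lp_feasible e x y', lp_obj w x y' <= lp_obj w x y
                & (#|badset y'| < #|badset y|)%N].
Proof.
move=> [Hb He] /card_gt0P [i1 i1B].
set B := badset y.
have hB i : i \in B -> [/\ ~~ x i, 0 < y i, y i < 1 & y i != 2^-1].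
  rewrite inE => /andP[xi nh]; have := Hb i xi.
  move: nh; rewrite /halfb !negb_or => /andP[/andP[h0 hh] h1] /andP[y0 y1].
  by split => //; rewrite lt_neqAle ?y0 ?y1 ?andbT // eq_sym.
have hnB i : ~~ x i -> i \notin B -> halfb (y i).
  by move=> xi; rewrite inE xi /= negbK.
pose d i : R := if i \in B then (if y i < 2^-1 then -1 else 1) else 0.
pose D := \sum_(i < n | ~~ x i) (w i)%:R * d i.
pose s : R := if 0 < D then -1 else 1.
pose dist i : R := if 0 < D then (if y i < 2^-1 then 2^-1 - y i else y i - 2^-1)
                   else (if y i < 2^-1 then y i else 1 - y i).
have [i0 i0B i0min] := @argmin_ex R _ (fun i => i \in B) dist i1 i1B.
have hdist i : i \in B -> 0 < dist i.
  move=> /hB[_ y0 y1 yh]; rewrite /dist.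
  case: (ltgtP (y i) 2^-1) yh => // h _; case: ifP => _; lra.
have d0 := hdist i0 i0B.
pose t := s * dist i0.
pose y' i := y i + t * d i.
have region i : ~~ x i ->
   [\/ [/\ 0 < y i, y i < 2^-1, 0 <= y' i, y' i <= 2^-1 & y' i = y i - t],
       [/\ 2^-1 < y i, y i < 1, 2^-1 <= y' i, y' i <= 1 & y' i = y i + t] |
       y' i = y i /\ (y i = 0 \/ y i = 2^-1 \/ y i = 1)].
  move=> xi; case iB: (i \in B); last first.
    apply: Or33; split; first by rewrite /y' /d iB mulr0 addr0.
    move: (hnB i xi (negbT iB)); rewrite /halfb => /orP[/orP[]|] /eqP ->; tauto.
  have hle := i0min i iB; have [_ y0 y1 yh] := hB i iB.
  rewrite /y' /d iB /t; move: hle; move: (dist i0) d0 => dd dd0.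
  rewrite /dist /s.
  case: (ltgtP (y i) 2^-1) yh => // h _ /=; case: (boolP (0 < D)) => Dp;
    rewrite ?Dp ?(negbTE Dp) /= => hle.
  - by apply: Or31; split; lra.
  - by apply: Or31; split; lra.
  - by apply: Or32; split; lra.
  - by apply: Or32; split; lra.
exists y'; split.
- split.
    by move=> i xi; case: (region i xi) => [[]|[]|[-> _]]; try lra; exact: Hb.
  move=> i j eij xi xj; have := He i j eij xi xj.
  case: (region i xi) => [[]|[]|[-> ]]; case: (region j xj) => [[]|[]|[-> ]];
    try lra; try (case=> [->|[->|->]]; lra);
    try (move=> h1 h2; case: h1 => [->|[->|->]]; case: h2 => [->|[->|->]]; lra).
- have -> : lp_obj w x y' = lp_obj w x y + t * D.
    rewrite /lp_obj /D mulr_sumr -big_split /=; apply: eq_bigr => i _.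
    rewrite /y'; ring.
  suff : t * D <= 0 by lra.
  rewrite /t [s * _]mulrC -mulrA; apply: mulr_ge0_le0; first exact: ltW.
  by rewrite /s; case: ltP => h; lra.
- apply: proper_card; apply/properP; split.
    apply/fintype.subsetP => i; rewrite !inE => /andP[xi nh]; rewrite xi /=.
    apply: contra nh => hh.
    have iB : i \notin B by rewrite inE hh andbF.
    by rewrite /y' /d (negbTE iB) mulr0 addr0.
  exists i0 => //; rewrite inE negb_and negbK; apply/orP; right.
  have := hB i0 i0B; move=> [_ y0 y1 yh].
  have : y' i0 = 0 \/ y' i0 = 2^-1 \/ y' i0 = 1.
    rewrite /y' /d i0B /t /s /dist.
    case: (ltgtP (y i0) 2^-1) yh => // h _ /=; case: (boolP (0 < D)) => Dp;
      rewrite ?Dp ?(negbTE Dp) /=.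
    - right; left; lra.
    - left; lra.
    - right; left; lra.
    - right; right; lra.
  by rewrite /halfb => -[->|[->|->]]; rewrite eqxx ?orbT.
Qed.

Lemma red (y : 'I_n -> R) : lp_feasible e x y ->
  exists2 f, feasb f & (val3 f)%:R / 2 <= lp_obj w x y.
Proof.
move: {2}#|badset y| (leqnn #|badset y|) => k; elim: k y => [|k IH] y.
  by rewrite leqn0 => /eqP h hf; exact: red_base.
move=> hk hf; case: (posnP #|badset y|) => h0; first exact: red_base.
have [y' [hf' hle hlt]] := red_step hf h0.
have [f Hf Hle] := IH y' (leq_trans (ltnSE (leq_trans hlt hk)) (leqnn _)) hf'.
by exists f => //; exact: le_trans hle.
Qed.
Lemma LP_eq : LP R e w x = m2%:R / 2.
Proof.
pose S := [set v : R | exists y : 'I_n -> R, lp_feasible e x y /\ v = lp_obj w x y]%classic.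
have [f Hf Hm] := m2_attained.
have mS : S (m2%:R / 2).
  exists (fun i => ((f i : nat)%:R : R) / 2); split; last first.
    rewrite Hm /lp_obj /val3 natr_sum mulr_suml; apply: eq_bigr => i _.
    by rewrite natrM mulrA.
  split.
    move=> i _; have := ltn_ord (f i); rewrite ltnS -(ler_nat R) => h.
    apply/andP; split; first by rewrite divr_ge0 ?ler0n.
    have h2 : (2 : R) = 2%:R by [].
    move: h; rewrite -h2 => h; lra.
  move=> i j eij xi xj.
  move/forallP: Hf => /(_ i) /forallP /(_ j); rewrite eij xi xj /= -(ler_nat R) natrD.
  have h2 : (2 : R) = 2%:R by [].
  rewrite -h2 => h; lra.
have lb : lbound S (m2%:R / 2).
  move=> v [y [hy ->]]; have [g Hg Hle] := red hy.
  apply: le_trans Hle; rewrite ler_pM2r ?invr_gt0 ?ltr0n // ler_nat.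
  exact: m2_le.
apply/eqP; rewrite eq_le; apply/andP; split.
  have := @ge_inf R S; rewrite /LP -/S; apply => //.
  by exists (m2%:R / 2).
by rewrite /LP -/S; apply: lb_le_inf => //; exists (m2%:R / 2).
Qed.
Lemma setT_cover : is_vertex_cover e [set: 'I_n]%SET.
Proof. by apply/forallP=> i; apply/forallP=> j; rewrite !finset.in_setT implybT. Qed.

Lemma OPT_attained : exists2 C, is_vertex_cover e C & weight w C = OPT e w.
Proof.
rewrite /OPT; case: (nbigmin_attained (is_vertex_cover e) (weight w) (weight w [set: 'I_n]%SET)) => [->|[C HC ->]].
  by exists [set: 'I_n]%SET => //; exact: setT_cover.
by exists C.
Qed.

Lemma m2_le_OPT : (m2 <= 2 * OPT e w)%N.
Proof.
have [C HC <-] := OPT_attained.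
pose f : {ffun 'I_n -> 'I_3} := [ffun i => if i \in C then ord_max else ord0].
apply: (leq_trans (m2_le (f := f) _)).
  apply/forallP=> i; apply/forallP=> j; apply/implyP => /andP[/andP[eij _] _].
  move/forallP: HC => /(_ i) /forallP /(_ j); rewrite eij /= !ffunE.
  by case: (i \in C); case: (j \in C).
rewrite /val3 /weight big_distrr /= big_mkcond /= [X in (_ <= X)%N]big_mkcond /=.
apply: leq_sum => i _; rewrite ffunE.
case: (x i); case: (i \in C) => /=; [done|done| |]; first by rewrite mulnC. 
by rewrite muln0.
Qed.
End LPhalf.


Section Chain.
Variables (R : realType) (n : nat) (e : rel 'I_n) (w : 'I_n -> nat).
Hypothesis hw : forall i, (0 < w i)%N.
Hypothesis hn : (0 < n)%N.

Definition sumw : nat := (\sum_(i < n) w i)%N.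
Definition mc (P : {set bits n}) : nat := \big[minn/sumw]_(z | z \in P) cost w z.
Definition zb := zero_bits n.

Lemma cost_le_sumw (x : bits n) : (cost w x <= sumw)%N.
Proof. by apply: leq_sum => i _; case: (x i); rewrite ?muln1 ?muln0. Qed.

Lemma cost_eq0 (x : bits n) : cost w x = 0%N -> x = zb.
Proof.
move=> /eqP; rewrite /cost sum_nat_eq0 => /forallP h.
apply/ffunP => i; rewrite ffunE; have := h i; rewrite /= muln_eq0.
case: (x i) => //=.
by rewrite orbF => /eqP hh; have := hw i; rewrite hh.
Qed.

Lemma cost_zb : cost w zb = 0%N.
Proof. by rewrite /cost big1 // => i _; rewrite ffunE muln0. Qed.

Lemma cost_ge1 (x : bits n) : x != zb -> (1 <= cost w x)%N.
Proof. by move=> h; rewrite lt0n; apply/eqP => /cost_eq0 /eqP; apply/negP. Qed.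

Lemma sumw_ge1 : (1 <= sumw)%N.
Proof.
rewrite /sumw (bigD1 (Ordinal hn)) //=; exact: leq_trans (hw _) (leq_addr _ _).
Qed.

Lemma mc_le (P : {set bits n}) (z : bits n) : z \in P -> (mc P <= cost w z)%N.
Proof. by move=> zP; rewrite /mc; apply: nbigmin_le. Qed.

Lemma mc_ub (P : {set bits n}) : (mc P <= sumw)%N.
Proof. by rewrite /mc; apply: nbigmin_ub. Qed.

Lemma mc_att (P : {set bits n}) : (0 < #|P|)%N -> exists2 z, z \in P & mc P = cost w z.
Proof.
move=> /card_gt0P [z0 z0P].
rewrite /mc; case: (nbigmin_attained (fun z => z \in P) (cost w) sumw) => [h|[z zP ->]].
  exists z0 => //; apply/eqP; rewrite eqn_leq -{1}h nbigmin_le //= h.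
  exact: cost_le_sumw.
by exists z.
Qed.

Lemma mc_ge1 (P : {set bits n}) : zb \notin P -> (1 <= mc P)%N.
Proof.
move=> hz; rewrite /mc; case: (nbigmin_attained (fun z => z \in P) (cost w) sumw) => [->|[z zP ->]].
  exact: sumw_ge1.
by apply: cost_ge1; apply: contraNneq hz => <-.
Qed.

Definition Ac : R := expR 1 * n%:R * (2 * OPT e w).+1%:R.
Definition Phi (P : {set bits n}) : R :=
  if zb \in P then 0 else Ac * (1 + ln (mc P)%:R).

Lemma Ac_ge0 : 0 <= Ac.
Proof. by rewrite /Ac !mulr_ge0 ?ler0n // ltW // expR_gt0. Qed.

Lemma ln_nat_ge0 k : (1 <= k)%N -> 0 <= ln (k%:R : R).
Proof. by move=> h; apply: ln_ge0; rewrite ler1n. Qed.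

Lemma Phi_ge0 (P : {set bits n}) : 0 <= Phi P.
Proof.
rewrite /Phi; case: ifP => // hz; apply: mulr_ge0; first exact: Ac_ge0.
have := ln_nat_ge0 (mc_ge1 (negbT hz)); lra.
Qed.

Lemma ler_ln_nat a b : (1 <= a)%N -> (a <= b)%N -> ln (a%:R : R) <= ln b%:R.
Proof.
move=> ha hab; rewrite ler_ln ?posrE ?ltr0n ?ler_nat //; exact: leq_trans ha hab.
Qed.

Lemma Phi_le (P : {set bits n}) : Phi P <= Ac * (1 + ln (sumw%:R)).
Proof.
rewrite /Phi; case: ifP => hz.
  apply: mulr_ge0; first exact: Ac_ge0.
  have := ln_nat_ge0 sumw_ge1; lra.
apply: ler_wpM2l; first exact: Ac_ge0.
rewrite lerD2l; apply: ler_ln_nat; [exact: mc_ge1 (negbT hz)|exact: mc_ub].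
Qed.

Lemma mc_update (P : {set bits n}) (x' : bits n) : (mc (update R e w P x') <= mc P)%N.
Proof.
rewrite /update; case: ifP => // _.
case: (posnP #|P|) => hP.
  rewrite {2}/mc; case: (nbigmin_attained (fun z => z \in P) (cost w) sumw) => [->|[z zP _]].
    exact: mc_ub.
  by rewrite (card0_eq hP) in zP.
have [z zP ->] := mc_att hP.
case fz: (fle R e w x' z).
  apply: leq_trans (mc_le (setU11 _ _)) _.
  by case/andP: fz.
by apply: mc_le; rewrite setU1r // inE zP fz.
Qed.

Lemma Phi_update (P : {set bits n}) (x' : bits n) : zb \notin P -> Phi (update R e w P x') <= Phi P.
Proof.
move=> hz; rewrite {2}/Phi (negbTE hz) /Phi.
case: ifP => hz'.
  apply: mulr_ge0; first exact: Ac_ge0.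
  have := ln_nat_ge0 (mc_ge1 hz); lra.
apply: ler_wpM2l; first exact: Ac_ge0.
rewrite lerD2l; apply: ler_ln_nat; [exact: mc_ge1 (negbT hz')|exact: mc_update].
Qed.

Definition Inv (P : {set bits n}) : bool :=
  (0 < #|P|)%N && [forall a in P, forall b in P, (a != b) ==> ~~ fle R e w a b].

Lemma Inv_update (P : {set bits n}) (x' : bits n) : Inv P -> Inv (update R e w P x').
Proof.
rewrite /update; case: ifP => // /negbT hex /andP[_ /forallP hP].
apply/andP; split; first by apply/card_gt0P; exists x'; exact: setU11.
apply/forallP => a; apply/implyP; rewrite !inE => ha.
apply/forallP => b; apply/implyP; rewrite !inE => hb.
case/orP: ha => [/eqP ->|/andP[aP fa]]; case/orP: hb => [/eqP ->|/andP[bP fb]].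
- by rewrite eqxx.
- by apply/implyP.
- apply/implyP => _; apply: contra hex => h; apply/existsP; exists a; exact/andP.
- by have := hP a; rewrite aP /= => /forallP /(_ b); rewrite bP.
Qed.
Lemma card_Inv (P : {set bits n}) : Inv P -> (#|P| <= (2 * OPT e w).+1)%N.
Proof.
case/andP => _ /forallP hP.
pose g (a : bits n) : 'I_(2 * OPT e w).+1 := inord (m2 e w a).
have -> : (2 * OPT e w).+1 = #|'I_(2 * OPT e w).+1| by rewrite card_ord.
apply: (leq_card_in g) => a b aP bP /= hg.
have hm : m2 e w a = m2 e w b.
  by move: (congr1 (@nat_of_ord _) hg); rewrite /g !inordK // ltnS m2_le_OPT.
apply/eqP; apply: contraT => hab.
have h1 := hP a; rewrite aP /= in h1; move/forallP: h1 => /(_ b); rewrite bP hab /=.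
have h2 := hP b; rewrite bP /= in h2; move/forallP: h2 => /(_ a); rewrite aP eq_sym hab /=.
have hLP : LP R e w a = LP R e w b by rewrite !LP_eq hm.
rewrite /fle hLP lexx !andbT.
by case/orP: (leq_total (cost w a) (cost w b)) => ->.
Qed.

Lemma ninv_bounds : 0 <= (n%:R : R)^-1 <= 1.
Proof.
by rewrite invr_ge0 ler0n /= invf_le1 ?ltr0n // ler1n.
Qed.

Lemma mutp_ge0 (x x' : bits n) : 0 <= mutp R x x'.
Proof.
have := ninv_bounds => /andP[h0 h1].
by apply: prodr_ge0 => i _; case: ifP => _ //; rewrite subr_ge0.
Qed.

Lemma mutp_sum1 (x : bits n) : \sum_(x' : bits n) mutp R x x' = 1.
Proof.
rewrite /mutp.
rewrite -(bigA_distr_bigA (fun i b => if x i != b then (n%:R : R)^-1 else 1 - n%:R^-1)).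
rewrite big1 // => i _; rewrite big_bool /=.
by case: (x i) => /=; ring.
Qed.

Definition flip (z : bits n) (i : 'I_n) : bits n :=
  [ffun j => if j == i then ~~ z j else z j].

Lemma flip_inj (z : bits n) : injective (flip z).
Proof.
move=> i j /ffunP /(_ i); rewrite !ffunE eqxx.
by case: eqP => // _; case: (z i).
Qed.

Lemma mutp_flip (z : bits n) i :
  mutp R z (flip z i) = n%:R^-1 * (1 - n%:R^-1) ^+ n.-1.
Proof.
rewrite /mutp (bigD1 i) //= ffunE eqxx.
have -> : z i != ~~ z i by case: (z i).
congr (_ * _).
rewrite (eq_bigr (fun _ => 1 - (n%:R : R)^-1)); last first.
  by move=> j hj; rewrite ffunE (negbTE hj) eqxx.
by rewrite prodr_const cardC1 card_ord.
Qed.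

Lemma cost_sum1 (z : bits n) : cost w z = (\sum_(i | z i) w i)%N.
Proof.
rewrite /cost [RHS]big_mkcond /=; apply: eq_bigr => i _.
by case: (z i); rewrite ?muln1 ?muln0.
Qed.

Lemma cost_flip (z : bits n) i : z i -> (cost w (flip z i) + w i = cost w z)%N.
Proof.
move=> zi; rewrite /cost (bigD1 i) //= [in RHS](bigD1 i) //= ffunE eqxx zi /=.
rewrite muln0 muln1 add0n addnC; congr (_ + _)%N.
by apply: eq_bigr => j hj; rewrite ffunE (negbTE hj).
Qed.

Lemma q_bound : (n%:R * expR 1)^-1 <= n%:R^-1 * (1 - (n%:R : R)^-1) ^+ n.-1.
Proof.
have e0 : 0 < expR (1 : R) := expR_gt0 1.
have e1 : 1 <= expR (1 : R) by have := expR_ge1Dx (1 : R); lra.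
rewrite invfM ler_wpM2l ?invr_ge0 ?ler0n //.
case: n hn => // m _ /=.
case: (posnP m) => [->|m0]; first by rewrite expr0 invf_le1.
have hm : (m%:R : R) != 0 by rewrite pnatr_eq0 -lt0n.
have hm0 : (0 : R) < m%:R by rewrite ltr0n.
have -> : 1 - (m.+1%:R : R)^-1 = (1 + (m%:R)^-1)^-1.
  rewrite -[m.+1]addn1 natrD; field.
  by rewrite hm /=; apply/negP => /eqP h; lra.
have hp : 0 < 1 + (m%:R : R)^-1 by rewrite ltr_wpDr ?invr_ge0 ?ler0n.
rewrite exprVn lef_pV2 ?posrE ?exprn_gt0 //.
apply: (@le_trans _ _ (expR ((m%:R : R)^-1) ^+ m)).
  by apply: lerXn2r; rewrite ?nnegrE ?(ltW hp) ?(ltW (expR_gt0 _)) ?expR_ge1Dx.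
by rewrite -expRM_natl mulfV.
Qed.
Lemma ln_drop (c d : nat) : (1 <= d)%N -> (d <= c)%N ->
  ((c - d)%:R / c%:R : R) <= ln c%:R - ln d%:R.
Proof.
move=> d1 dc.
have c0 : (0 : R) < c%:R by rewrite ltr0n; exact: leq_trans d1 dc.
have d0 : (0 : R) < d%:R by rewrite ltr0n.
have h := @le_ln1Dx R (d%:R / c%:R - 1).
have hx : -1 < d%:R / c%:R - 1 :> R.
  have : 0 < d%:R / c%:R :> R by rewrite divr_gt0.
  lra.
have := h hx; rewrite addrC subrK ln_div ?posrE //.
rewrite natrB // mulrBl mulfV ?gt_eqF //; lra.
Qed.

Lemma phi_drop (P : {set bits n}) (z : bits n) i :
  z \in P -> cost w z = mc P -> z i -> zb \notin P ->
  Ac * (w i)%:R / (mc P)%:R <= Phi P - Phi (update R e w P (flip z i)).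
Proof.
move=> zP hz zi hzb.
set c := mc P.
have c1 : (1 <= c)%N := mc_ge1 hzb.
have c0 : (0 : R) < c%:R by rewrite ltr0n.
have hcf := cost_flip zi.
have wc : (w i <= c)%N by rewrite /c -hz -hcf leq_addl.
have hwc : (w i)%:R / c%:R <= (1 : R).
  by rewrite ler_pdivrMr // mul1r ler_nat.
have hA := Ac_ge0.
have hup : update R e w P (flip z i) = flip z i |: [set y in P | ~~ fle R e w (flip z i) y].
  rewrite /update; case: ifP => // /existsP [y /andP [yP /andP [hy _]]].
  have := mc_le yP; rewrite -/c => hcy.
  have hc' : c = (cost w (flip z i) + w i)%N by rewrite hcf hz.
  have := leq_trans hcy hy; have := hw i; rewrite hc'; lia.
rewrite {1}/Phi (negbTE hzb) -/c.
set U := update R e w P (flip z i).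
have lnc : 0 <= ln (c%:R : R) := ln_nat_ge0 c1.
rewrite {1}/Phi; case: ifP => hzU.
  rewrite subr0 -mulrA; apply: ler_wpM2l => //; lra.
have m1 : (1 <= mc U)%N := mc_ge1 (negbT hzU).
have mU : (mc U <= c - w i)%N.
  rewrite /U hup; apply: leq_trans (mc_le (setU11 _ _)) _.
  have := hcf; rewrite hz -/c; lia.
have hd : ((c - mc U)%:R / c%:R : R) <= ln c%:R - ln (mc U)%:R := ln_drop m1 (leq_trans mU (leq_subr _ _)).
have hw' : (w i)%:R / c%:R <= ((c - mc U)%:R / c%:R : R).
  rewrite ler_pM2r ?invr_gt0 // ler_nat; lia.
rewrite -mulrA.
have -> : Ac * (1 + ln c%:R) - Ac * (1 + ln (mc U)%:R) = Ac * (ln c%:R - ln (mc U)%:R) by ring.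
apply: ler_wpM2l => //; exact: le_trans hw' hd.
Qed.
Lemma drift (P : {set bits n}) : Inv P -> zb \notin P ->
  \sum_(P' : {set bits n}) kernel R e w P P' * Phi P' <= Phi P - 1.
Proof.
move=> HI hzb.
have hcard := card_Inv HI.
have hP0 : (0 < #|P|)%N by case/andP: HI.
have [z zP hz] := mc_att hP0.
pose F := fun x : bits n => \sum_(x' : bits n) mutp R x x' * Phi (update R e w P x').
have E : \sum_(P' : {set bits n}) kernel R e w P P' * Phi P' = #|P|%:R^-1 * \sum_(x in P) F x.
  rewrite /kernel.
  under eq_bigr do rewrite -mulrA.
  rewrite -mulr_sumr; congr (_ * _).
  under eq_bigr do rewrite mulr_suml.
  rewrite exchange_big /=; apply: eq_bigr => x _.
  under eq_bigr do rewrite mulr_suml.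
  rewrite exchange_big /=; apply: eq_bigr => x' _.
  under eq_bigr do rewrite -mulrA.
  rewrite -mulr_sumr; congr (_ * _).
  rewrite (bigD1 (update R e w P x')) //= eqxx mul1r big1 ?addr0 // => P' hP'.
  by rewrite eq_sym (negbTE hP') mul0r.
have F_le x : F x <= Phi P.
  apply: (@le_trans _ _ (\sum_(x' : bits n) mutp R x x' * Phi P)).
    apply: ler_sum => x' _; apply: ler_wpM2l; [exact: mutp_ge0|exact: Phi_update].
  by rewrite -mulr_suml mutp_sum1 mul1r.
pose Q : R := n%:R^-1 * (1 - n%:R^-1) ^+ n.-1.
have Q0 : 0 <= Q.
  have := ninv_bounds => /andP[h0 h1].
  by rewrite /Q mulr_ge0 // exprn_ge0 // subr_ge0.
have Fz : F z <= Phi P - Q * Ac.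
  suff : Q * Ac <= \sum_(x' : bits n) mutp R z x' * (Phi P - Phi (update R e w P x')).
    have -> : \sum_(x' : bits n) mutp R z x' * (Phi P - Phi (update R e w P x')) = Phi P - F z.
      under eq_bigr do rewrite mulrBr.
      by rewrite sumrB -mulr_suml mutp_sum1 mul1r.
    lra.
  pose G := fun x' => mutp R z x' * (Phi P - Phi (update R e w P x')).
  have G0 x' : 0 <= G x'.
    by apply: mulr_ge0; [exact: mutp_ge0| rewrite subr_ge0; exact: Phi_update].
  pose S := [set i | z i].
  apply: (@le_trans _ _ (\sum_(x' in flip z @: S) G x')); last first.
    rewrite [X in _ <= X](bigID (fun x' => x' \in flip z @: S)) /= lerDl.
    by apply: sumr_ge0 => x' _; exact: G0.
  rewrite big_imset /=; last by move=> i j _ _; exact: flip_inj.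
  apply: (@le_trans _ _ (\sum_(i in S) Q * (Ac * (w i)%:R / (mc P)%:R))).
    have hsum : (\sum_(i in S) w i)%N = mc P.
      by rewrite hz cost_sum1; apply: eq_bigl => i; rewrite inE.
    have c0 : (mc P)%:R != 0 :> R by rewrite pnatr_eq0 -lt0n; exact: mc_ge1.
    rewrite -mulr_sumr ler_wpM2l // -mulr_suml -mulr_sumr -natr_sum hsum mulfK //.
  apply: ler_sum => i; rewrite inE => zi.
  rewrite /G mutp_flip -/Q; apply: ler_wpM2l => //.
  exact: phi_drop zP (esym hz) zi hzb.
have sumF : \sum_(x in P) F x <= #|P|%:R * Phi P - Q * Ac.
  apply: (@le_trans _ _ (\sum_(x in P) (Phi P - (x == z)%:R * (Q * Ac)))).
    apply: ler_sum => x _; case: eqP => [->|_]; first by rewrite mul1r.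
    by rewrite mul0r subr0.
  rewrite sumrB sumr_const (bigD1 z) //= eqxx mul1r big1 ?addr0; first by rewrite mulr_natl.
  by move=> x /andP[_ /negbTE ->]; rewrite mul0r.
have QA : #|P|%:R <= Q * Ac.
  apply: (@le_trans _ _ ((2 * OPT e w).+1)%:R); first by rewrite ler_nat.
  apply: (@le_trans _ _ ((n%:R * expR 1)^-1 * Ac)); last first.
    by apply: ler_wpM2r; [exact: Ac_ge0|exact: q_bound].
  have n0 : (n%:R : R) != 0 by rewrite pnatr_eq0 -lt0n.
  have e0 : expR (1 : R) != 0 by rewrite gt_eqF // expR_gt0.
  rewrite /Ac; rewrite le_eqVlt; apply/orP; left; apply/eqP; field.
  by rewrite n0 e0.
have hp : (0 : R) < #|P|%:R by rewrite ltr0n.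
rewrite E.
apply: (@le_trans _ _ (#|P|%:R^-1 * (#|P|%:R * Phi P - Q * Ac))).
  by apply: ler_wpM2l => //; rewrite invr_ge0 ltW.
rewrite mulrBr mulrA mulVf ?gt_eqF // mul1r.
have : 1 <= #|P|%:R^-1 * (Q * Ac) by rewrite ler_pdivlMl // mulr1.
lra.
Qed.
Lemma kernel_ge0 (P P' : {set bits n}) : 0 <= kernel R e w P P'.
Proof.
rewrite /kernel mulr_ge0 ?invr_ge0 ?ler0n //.
apply: sumr_ge0 => x _; apply: sumr_ge0 => x' _.
by rewrite mulr_ge0 ?ler0n // mutp_ge0.
Qed.

Lemma init_ge0 (P : {set bits n}) : 0 <= init R P.
Proof.
apply: sumr_ge0 => x _; rewrite mulr_ge0 ?ler0n // invr_ge0 exprn_ge0 // ler0n.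
Qed.

Lemma surv_ge0 t (P : {set bits n}) : 0 <= surv R e w t P.
Proof.
elim: t P => [|t IH] P /=; rewrite mulr_ge0 ?ler0n //; first exact: init_ge0.
by apply: sumr_ge0 => Q _; rewrite mulr_ge0 ?IH ?kernel_ge0.
Qed.

Lemma surv_zero t (P : {set bits n}) : zb \in P -> surv R e w t P = 0.
Proof. by case: t => [|t] /= h; rewrite /zb in h; rewrite h mul0r. Qed.

Lemma Inv1 (x : bits n) : Inv [set x].
Proof.
apply/andP; split; first by rewrite cards1.
apply/forallP => a; apply/implyP; rewrite inE => /eqP ->.
apply/forallP => b; apply/implyP; rewrite inE => /eqP ->.
by rewrite eqxx.
Qed.

Lemma surv_Inv t (P : {set bits n}) : ~~ Inv P -> surv R e w t P = 0.
Proof.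
elim: t P => [|t IH] P hP /=.
  rewrite /init big1 ?mulr0 // => x _.
  case: eqP => [hx|_]; last by rewrite mulr0.
  by move: hP; rewrite hx Inv1.
rewrite big1 ?mulr0 // => Q _.
case hQ: (Inv Q); last by rewrite IH ?hQ // mul0r.
rewrite /kernel big1 ?mulr0 // => x _; rewrite big1 // => x' _.
case: eqP => [hx|_]; last by rewrite mulr0.
by move: hP; rewrite -hx Inv_update.
Qed.

Definition apot t : R := \sum_(P : {set bits n}) surv R e w t P * Phi P.

Lemma apot_ge0 t : 0 <= apot t.
Proof. by apply: sumr_ge0 => P _; rewrite mulr_ge0 ?surv_ge0 ?Phi_ge0. Qed.

Lemma apot_step t : apot t.+1 <= apot t - prob_T_gt R e w t.
Proof.
have -> : apot t.+1 = \sum_(Q : {set bits n}) surv R e w t Q *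
    \sum_(P : {set bits n}) kernel R e w Q P * Phi P.
  rewrite /apot /=.
  have h (P : {set bits n}) : (zero_bits n \notin P)%:R * (\sum_(Q : {set bits n}) surv R e w t Q * kernel R e w Q P) * Phi P
           = \sum_(Q : {set bits n}) surv R e w t Q * (kernel R e w Q P * Phi P).
    case hz: (zero_bits n \in P) => /=.
      by rewrite /Phi /zb hz !mulr0 big1 // => Q _; rewrite !mulr0.
    by rewrite mul1r mulr_suml; apply: eq_bigr => Q _; rewrite mulrA.
  rewrite (eq_bigr _ (fun P _ => h P)) exchange_big /=.
  by apply: eq_bigr => Q _; rewrite mulr_sumr.
rewrite /apot /prob_T_gt -sumrB; apply: ler_sum => Q _.
rewrite -[X in _ - X]mulr1 -mulrBr.
case hI: (Inv Q); last by rewrite surv_Inv ?hI // !mul0r.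
case hz: (zb \in Q); first by rewrite surv_zero // !mul0r.
by apply: ler_wpM2l; [exact: surv_ge0| apply: drift => //; rewrite hz].
Qed.

Lemma sum_prob N : \sum_(t < N) prob_T_gt R e w t <= apot 0 - apot N.
Proof.
elim: N => [|N IH]; first by rewrite big_ord0 subrr.
rewrite big_ord_recr /=; have := apot_step N; lra.
Qed.

Lemma init_sum : \sum_(P : {set bits n}) init R P = 1.
Proof.
rewrite /init exchange_big /=.
rewrite (eq_bigr (fun _ => (2%:R ^- n : R))); last first.
  move=> x _; rewrite (bigD1 [set x]) //= eqxx mulr1 big1 ?addr0 // => P hP.
  by rewrite (negbTE hP) mulr0.
rewrite sumr_const card_ffun card_bool card_ord -[_ *+ (2 ^ n)]mulr_natr natrX mulVf //.
by rewrite expf_neq0 // pnatr_eq0.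
Qed.

Lemma apot0_le : apot 0 <= Ac * (1 + ln sumw%:R).
Proof.
rewrite /apot /=.
apply: (@le_trans _ _ (\sum_(P : {set bits n}) init R P * (Ac * (1 + ln sumw%:R)))).
  apply: ler_sum => P _.
  have h1 : (zero_bits n \notin P)%:R * init R P <= init R P.
    by case: (zero_bits n \notin P); rewrite ?mul1r ?mul0r ?init_ge0.
  apply: (@le_trans _ _ (init R P * Phi P)).
    by apply: ler_wpM2r; [exact: Phi_ge0|].
  by apply: ler_wpM2l; [exact: init_ge0| exact: Phi_le].
by rewrite -mulr_suml init_sum mul1r.
Qed.

Lemma main_bound N : \sum_(t < N) prob_T_gt R e w t <= Ac * (1 + ln sumw%:R).
Proof.
apply: le_trans (sum_prob N) _; have := apot_ge0 N; have := apot0_le; lra.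
Qed.
End Chain.


Unset Implicit Arguments.
Theorem lemma4 (R : realType) :
  exists C : R,
  forall (n : nat) (e : rel 'I_n) (w : 'I_n -> nat),
    symmetric e -> irreflexive e -> (exists i j, e i j) ->
    (forall i, 0 < w i)%N ->
    forall N : nat,
      \sum_(t < N) prob_T_gt R e w t
        <= C * (OPT e w)%:R * n%:R * (ln (Wmax w)%:R + ln n%:R).
Proof.
exists (expR 1 * 3 * (1 + (ln (2 : R))^-1)).
move=> n e w _ irr [i [j eij]] hw N.
have hij : (i : nat) != j.
  apply/negP => /eqP h; have hh : i = j by apply: val_inj.
  by move: eij; rewrite hh irr.
have n2 : (1 < n)%N by have := ltn_ord i; have := ltn_ord j; move: hij; lia.
have hn : (0 < n)%N by lia.
apply: le_trans (main_bound R e hw hn N) _.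
have [C HC hC] := OPT_attained e w.
have opt1 : (1 <= OPT e w)%N.
  rewrite -hC; move/forallP: HC => /(_ i) /forallP /(_ j); rewrite eij /=.
  case/orP => hk.
    by rewrite /weight (bigD1 i) //=; exact: leq_trans (hw i) (leq_addr _ _).
  by rewrite /weight (bigD1 j) //=; exact: leq_trans (hw j) (leq_addr _ _).
have W1 : (1 <= Wmax w)%N by apply: leq_trans (hw i) (leq_bigmax _).
have sW : (sumw w <= n * Wmax w)%N.
  rewrite /sumw -[n in (_ <= n * _)%N]card_ord -sum_nat_const.
  by apply: leq_sum => k _; apply: leq_bigmax.
have s1 : (1 <= sumw w)%N by rewrite /sumw (bigD1 i) //=; exact: leq_trans (hw i) (leq_addr _ _).
have l2 : 0 < ln (2 : R) by apply: ln_gt0; lra.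
have ln2n : ln (2 : R) <= ln n%:R by apply: ler_ln_nat.
have lW : 0 <= ln (Wmax w)%:R :> R by apply: ln_nat_ge0.
have lsum : ln (sumw w)%:R <= ln (Wmax w)%:R + ln (n%:R : R).
  rewrite addrC -lnM ?posrE ?ltr0n //.
  by rewrite -natrM; apply: ler_ln_nat.
set L := ln (Wmax w)%:R + ln (n%:R : R).
have h2 : 1 + ln (sumw w)%:R <= (1 + (ln (2 : R))^-1) * L.
  have : 1 <= L / ln 2 by rewrite ler_pdivlMr // /L; lra.
  move=> h; have -> : (1 + (ln (2 : R))^-1) * L = L + L / ln 2 by ring.
  rewrite /L in h *; lra.
have h1 : ((2 * OPT e w).+1)%:R <= 3 * (OPT e w)%:R :> R.
  by rewrite -natrM ler_nat; lia.
have e0 : 0 <= expR (1 : R) * n%:R by rewrite mulr_ge0 ?ler0n // ltW // expR_gt0.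
have s0 : 0 <= 1 + ln (sumw w)%:R :> R by have : 0 <= ln (sumw w)%:R :> R := ln_nat_ge0 _ s1; lra.
have key : Ac R e w * (1 + ln (sumw w)%:R) <=
    (expR 1 * n%:R) * (3 * (OPT e w)%:R) * ((1 + (ln (2:R))^-1) * L).
  rewrite /Ac -mulrA -[X in _ <= X]mulrA; apply: ler_wpM2l => //.
  by apply: ler_pM.
apply: le_trans key _; rewrite le_eqVlt; apply/orP; left; apply/eqP; rewrite /L; ring.
Qed.
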